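(* Let $p=2^{\ell}\pm1$ be a prime with $\ell\ge1$, and let $n\ge k+2$, $k\ge 2$, $\mathfrak{a}\ge1$ be integers with $L_n^{(k)}=(p+1)p^{\mathfrak{a}}-1$ and $p>n^{10}$. Then $2^{k-1}<10n^2$; in particular $k<10\log n$.
   Context: The $k$-Lucas sequence is defined by $L_{2-k}^{(k)}=\cdots=L_{-1}^{(k)}=0$, $L_0^{(k)}=2$, $L_1^{(k)}=1$, $L_n^{(k)}=L_{n-1}^{(k)}+\cdots+L_{n-k}^{(k)}$. $\log$ denotes the natural logarithm. *)

(* Defs.v *)
From Stdlib Require Import Reals Arith List.
Import ListNotations.

(* k-Lucas sequence: L_{2-k} = ... = L_{-1} = 0, L_0 = 2, L_1 = 1,
   L_n = L_{n-1} + ... + L_{n-k}.  We record only the terms with index n >= 0;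
   terms with negative index are 0, which is automatically handled by summing
   only the (at most k) last available terms. *)

Definition sum_nat (l : list nat) : nat := fold_right Nat.add 0 l.

Fixpoint klucas_list (k n : nat) : list nat :=
  match n with
  | 0 => [2]
  | S m =>
      let prev := klucas_list k m in
      let next := match m with
                  | 0 => 1
                  | _ => sum_nat (skipn (length prev - k) prev)
                  end in
      prev ++ [next]
  end.

Definition klucas (k n : nat) : nat := nth n (klucas_list k n) 0.

(* Main.v *)
Require Import Defs.
From Stdlib Require Import Reals Arith Znumtheory ZArith Lia Lra List.
Import ListNotations.
Open Scope nat_scope.

Lemma kl_len k n : length (klucas_list k n) = S n.
Proof. induction n; simpl; auto. rewrite length_app, IHn. simpl. lia. Qed.

Lemma kl_S k m : klucas_list k (S m) = klucas_list k m ++ [klucas k (S m)].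
Proof.
  assert (H: exists x, klucas_list k (S m) = klucas_list k m ++ [x]) by (eexists; reflexivity).
  destruct H as [x H]. unfold klucas. rewrite H. rewrite app_nth2; rewrite kl_len; [|lia].
  rewrite Nat.sub_diag. reflexivity.
Qed.

Lemma kl_prefix k n m i : i <= n -> nth i (klucas_list k (m + n)) 0 = nth i (klucas_list k n) 0.
Proof.
  intros H. induction m; simpl; auto.
  rewrite app_nth1; auto. rewrite kl_len. lia.
Qed.

Lemma kl_nth k n i : i <= n -> nth i (klucas_list k n) 0 = klucas k i.
Proof.
  intros H. unfold klucas. replace n with ((n - i) + i) by lia. apply kl_prefix. lia.
Qed.

Lemma sum_app (l r : list nat) : Defs.sum_nat (app l r) = Defs.sum_nat l + Defs.sum_nat r.
Proof. induction l; simpl; auto. unfold Defs.sum_nat in *. simpl. lia. Qed.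

Lemma sum_skip (l : list nat) (i : nat) : i < length l -> Defs.sum_nat (skipn i l) = nth i l 0 + Defs.sum_nat (skipn (S i) l).
Proof.
  revert i; induction l; intros i H; simpl in *. lia.
  destruct i. reflexivity. apply IHl. lia.
Qed.

Lemma kl_W k m : 1 <= m -> klucas k (S m) = Defs.sum_nat (skipn (S m - k) (klucas_list k m)).
Proof.
  intros H. unfold klucas.
  assert (E : klucas_list k (S m) = klucas_list k m ++ [match m with 0 => 1 | _ => Defs.sum_nat (skipn (length (klucas_list k m) - k) (klucas_list k m)) end]) by reflexivity.
  rewrite E; clear E.
  rewrite app_nth2; rewrite kl_len; [|lia].
  rewrite Nat.sub_diag. destruct m. lia. cbn [nth]. rewrite ?kl_len. reflexivity.
Qed.

Lemma kl_rec k n : 1 <= k -> 2 <= n ->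
  klucas k (S n) + (if k <=? n then klucas k (n - k) else 0) = 2 * klucas k n.
Proof.
  intros Hk Hn. destruct n as [|m]. lia.
  rewrite (kl_W k (S m)) by lia. rewrite kl_S.
  rewrite skipn_app. rewrite kl_len.
  replace (S (S m) - k - S m) with 0 by lia. simpl skipn at 2.
  rewrite sum_app.
  assert (E: klucas k (S m) = Defs.sum_nat (skipn (S m - k) (klucas_list k m))) by (apply kl_W; lia).
  assert (F: forall x, Defs.sum_nat [x] = x) by (intros; unfold Defs.sum_nat; simpl; lia).
  rewrite F.
  destruct (Nat.leb_spec k (S m)).
  - replace (S (S m) - k) with (S (S m - k)) by lia.
    rewrite (sum_skip _ (S m - k)) in E by (rewrite kl_len; lia).
    rewrite kl_nth in E by lia.
    lia.
  - replace (S (S m) - k) with 0 by lia. replace (S m - k) with 0 in E by lia.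
    simpl skipn in *. lia.
Qed.

Lemma kl_2 k : 2 <= k -> klucas k 2 = 3.
Proof. intros. destruct k as [|[|k]]; try lia. reflexivity. Qed.

Lemma kl_step k n : 2 <= k -> 2 <= n -> klucas k (S n) <= 2 * klucas k n.
Proof. intros. pose proof (kl_rec k n ltac:(lia) H0). lia. Qed.

Lemma kl_ub k n : 2 <= k -> 2 <= n -> 4 * klucas k n <= 3 * 2 ^ n.
Proof.
  intros Hk Hn. induction n as [|n IH]. lia.
  destruct (Nat.eq_dec n 1). subst. rewrite kl_2 by lia. simpl. lia.
  pose proof (kl_step k n Hk ltac:(lia)). rewrite Nat.pow_succ_r'. specialize (IH ltac:(lia)). lia.
Qed.

Lemma kl_pow k j : 2 <= k -> klucas k j <= 2 ^ S j.
Proof.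
  intros Hk. destruct j as [|[|j]]. unfold klucas; simpl; lia. unfold klucas; simpl; lia.
  pose proof (kl_ub k (S (S j)) Hk ltac:(lia)). rewrite Nat.pow_succ_r'. lia.
Qed.

Lemma kl_lb k n : 2 <= k -> 2 <= n ->
  3 * 2 ^ n * 2 ^ k <= 4 * 2 ^ k * klucas k n + 4 * n * 2 ^ n.
Proof.
  intros Hk Hn. induction n as [|n IH]. lia.
  destruct (Nat.eq_dec n 1). subst. rewrite kl_2 by lia. simpl. lia.
  specialize (IH ltac:(lia)).
  pose proof (kl_rec k n ltac:(lia) ltac:(lia)) as R.
  set (c := if k <=? n then klucas k (n - k) else 0) in R.
  assert (Hc : 2 ^ k * c <= 2 * 2 ^ n).
  { unfold c. destruct (Nat.leb_spec k n). 2: lia.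
    pose proof (kl_pow k (n - k) Hk).
    replace (2 * 2 ^ n) with (2 ^ k * 2 ^ S (n - k)).
    apply Nat.mul_le_mono_l; auto.
    rewrite <- Nat.pow_add_r, <- Nat.pow_succ_r'. f_equal. lia. }
  rewrite Nat.pow_succ_r'.
  set (K := 2 ^ k) in *. set (N := 2 ^ n) in *.
  set (f := klucas k n) in *. set (g := klucas k (S n)) in *.
  assert (K * g + K * c = 2 * (K * f)) by nia.
  nia.
Qed.

Lemma pow_plus P a : (P + 1) ^ a * (P - a) <= P ^ S a.
Proof.
  induction a. simpl. lia.
  rewrite !Nat.pow_succ_r'.
  destruct (Nat.le_gt_cases (S a) P).
  - set (Y := (P+1)^a) in *. set (Z := P ^ a) in *.
    assert ((P+1)*(P - S a) <= P * (P - a)) by nia.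
    assert (Y * ((P+1)*(P - S a)) <= Y * (P * (P - a))) by (apply Nat.mul_le_mono_l; auto).
    assert (P*(Y*(P-a)) <= P*(P*Z)) by (apply Nat.mul_le_mono_l; auto).
    set (W := P - S a) in *. set (V := P - a) in *.
    lia.
  - replace (P - S a) with 0 by lia. lia.
Qed.

Lemma pow_minus P a : 1 <= P -> P ^ S a <= P * (P - 1) ^ a + a * P ^ a.
Proof.
  intros HP. induction a. simpl. lia.
  rewrite !Nat.pow_succ_r'. rewrite Nat.pow_succ_r' in IHa.
  set (Y := (P-1)^a) in *. set (Z := P ^ a) in *.
  replace P with (S (P - 1)) at 3 4 5 6 by lia. set (q := P - 1) in *. nia.
Qed.

Lemma pow_auxZ k : 7 <= k -> (10 ^ 5 * 3 ^ Z.of_nat k < 32 ^ Z.of_nat (k - 1))%Z.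
Proof.
  intros H. induction k. lia.
  destruct (Nat.eq_dec k 6). subst. reflexivity.
  specialize (IHk ltac:(lia)). replace (S k - 1) with (S (k - 1)) by lia.
  rewrite !Nat2Z.inj_succ, !Z.pow_succ_r by lia. lia.
Qed.

Lemma nat_part k n : 2 <= k -> k + 2 <= n -> 2 ^ (k - 1) < 10 * n ^ 2 -> 3 ^ k < n ^ 10.
Proof.
  intros Hk Hn H.
  destruct (Nat.le_gt_cases k 6).
  - apply Nat.lt_le_trans with (4 ^ k). apply Nat.pow_lt_mono_l; lia.
    apply Nat.le_trans with (n ^ k). apply Nat.pow_le_mono_l; lia.
    apply Nat.pow_le_mono_r; lia.
  - pose proof (pow_auxZ k ltac:(lia)).
    assert ((2 ^ (k-1)) ^ 5 < (10 * n ^ 2) ^ 5) by (apply Nat.pow_lt_mono_l; lia).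
    rewrite <- Nat.pow_mul_r, Nat.mul_comm, Nat.pow_mul_r in H2.
    rewrite Nat.pow_mul_l, <- Nat.pow_mul_r in H2.
    apply Nat2Z.inj_lt in H2. apply Nat2Z.inj_lt.
    rewrite !Nat2Z.inj_pow in *. rewrite ?Nat2Z.inj_mul in H2. rewrite ?Nat2Z.inj_pow in H2.
    change (Z.of_nat (2^5)) with 32%Z in H2. change (Z.of_nat (10)) with 10%Z in H2.
    change (Z.of_nat 3) with 3%Z. change (Z.of_nat (2*5)) with 10%Z in H2.
    change (Z.of_nat 10) with 10%Z.
    assert (0 < 3 ^ Z.of_nat k)%Z by (apply Z.pow_pos_nonneg; lia).
    change (Z.of_nat 2) with 2%Z in H2; change (Z.of_nat 5) with 5%Z in H2.
    assert (E1: (2 ^ (5 * Z.of_nat (k-1)) = 32 ^ Z.of_nat (k-1))%Z) by (rewrite Z.pow_mul_r by lia; reflexivity).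
    assert (E2: ((Z.of_nat n ^ 2) ^ 5 = Z.of_nat n ^ 10)%Z) by (rewrite <- Z.pow_mul_r by lia; reflexivity).
    rewrite E1, E2 in H2. lia.
Qed.

Lemma ln_part k n : 2 <= k -> k + 2 <= n -> 2 ^ (k - 1) < 10 * n ^ 2 -> (INR k < 10 * ln (INR n))%R.
Proof.
  intros Hk Hn H. pose proof (nat_part k n Hk Hn H) as Hp.
  apply lt_INR in Hp. rewrite !pow_INR in Hp.
  assert (H3 : (0 < INR 3)%R) by (simpl; lra).
  assert (Hn0 : (0 < INR n)%R) by (apply lt_0_INR; lia).
  apply ln_increasing in Hp; [| apply pow_lt; auto].
  rewrite !ln_pow in Hp by auto.
  assert (1 <= ln (INR 3))%R.
  { destruct (Rle_or_lt 1 (ln (INR 3))) as [h|h]; auto.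
    apply exp_increasing in h. rewrite exp_ln in h by auto. pose proof exp_le_3. simpl in h. lra. }
  assert (0 <= INR k)%R by apply pos_INR.
  replace (INR 10) with 10%R in Hp by (simpl; lra). nra.
Qed.

Lemma core (p l n k a : nat) :
  1 <= l -> (p = 2 ^ l + 1 \/ p = 2 ^ l - 1) ->
  2 <= k -> k + 2 <= n -> 1 <= a ->
  klucas k n = (p + 1) * p ^ a - 1 -> n ^ 10 < p ->
  10 * n ^ 2 <= 2 ^ (k - 1) -> False.
Proof.
  intros Hl Hp Hk Hn Ha Heq Hpn Hc.
  pose proof (kl_ub k n Hk ltac:(lia)) as UB.
  pose proof (kl_lb k n Hk ltac:(lia)) as LB.
  set (f := klucas k n) in *. set (N := 2 ^ n) in *. set (K := 2 ^ k) in *.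
  assert (HK : 20 * n ^ 2 <= K).
  { unfold K. replace k with (S (k - 1)) at 1 by lia. rewrite (Nat.pow_succ_r' 2 (k - 1)). lia. }
  assert (HN : 16 <= N).
  { unfold N. change 16 with (2 ^ 4). apply Nat.pow_le_mono_r; lia. }
  assert (Kpos : 0 < K) by (unfold K; apply Nat.neq_0_lt_0, Nat.pow_nonzero; lia).
  assert (F1 : 59 * N <= 80 * f).
  { assert (A1 : 20 * n * (3 * N * K) <= 20 * n * (4 * K * f + 4 * n * N)) by (apply Nat.mul_le_mono_l; auto).
    assert (A2 : 4 * N * (20 * (n * n)) <= 4 * N * K) by (apply Nat.mul_le_mono_l; rewrite <- Nat.pow_2_r; auto).
    assert (A3 : (60 * n * N) * K <= (80 * n * f + 4 * N) * K) by lia.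
    apply Nat.mul_le_mono_pos_r in A3; auto.
    assert (4 * N <= n * N) by (apply Nat.mul_le_mono_r; lia).
    assert (A4 : n * (59 * N) <= n * (80 * f)) by lia.
    apply Nat.mul_le_mono_pos_l in A4; lia. }
  assert (Hp2 : 2 <= p).
  { assert (4 ^ 10 <= n ^ 10) by (apply Nat.pow_le_mono_l; lia).
    assert (1 <= 4 ^ 10) by (apply Nat.le_trans with (4 ^ 0); [simpl; lia | apply Nat.pow_le_mono_r; lia]).
    lia. }
  assert (Hn256 : 256 * n <= n ^ 10).
  { assert (4 ^ 4 <= n ^ 4) by (apply Nat.pow_le_mono_l; lia).
    assert (n ^ 4 <= n ^ 9) by (apply Nat.pow_le_mono_r; lia).
    replace (n ^ 10) with (n ^ 9 * n) by (rewrite Nat.mul_comm, <- Nat.pow_succ_r'; reflexivity).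
    simpl (4 ^ 4) in *. assert (256 * n <= n ^ 9 * n) by (apply Nat.mul_le_mono_r; lia). lia. }
  set (X := (p + 1) * p ^ a) in *.
  assert (Hpa : 1 <= p ^ a) by (apply Nat.le_trans with (p ^ 0); [simpl; lia | apply Nat.pow_le_mono_r; lia]).
  assert (HX1 : p ^ a <= X) by (unfold X; rewrite Nat.add_1_r; simpl; lia).
  assert (HX : X = f + 1) by lia.
  assert (Han : a <= n).
  { destruct (Nat.le_gt_cases a n) as [h|h]; auto. exfalso.
    assert (N < 2 ^ a) by (unfold N; apply Nat.pow_lt_mono_r; lia).
    assert (2 ^ a <= p ^ a) by (apply Nat.pow_le_mono_l; lia).
    lia. }
  set (P := 2 ^ l) in *.
  assert (HM : 2 ^ (l * S a) = P ^ S a) by (unfold P; apply Nat.pow_mul_r).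
  set (M := 2 ^ (l * S a)) in *.
  set (Z := P ^ a) in *.
  assert (HMZ : M = P * Z) by (rewrite HM; apply Nat.pow_succ_r').
  assert (Hcase : 2 * M <= N \/ N <= M).
  { destruct (Nat.le_gt_cases n (l * S a)) as [h|h].
    - right. apply Nat.pow_le_mono_r; lia.
    - left. unfold M, N. rewrite <- Nat.pow_succ_r'. apply Nat.pow_le_mono_r; lia. }
  assert (HZ : 1 <= Z) by (unfold Z; apply Nat.le_trans with (P ^ 0); [simpl; lia | apply Nat.pow_le_mono_r; unfold P; pose proof (Nat.pow_le_mono_r 2 1 l); simpl in *; lia]).
  assert (Mpos : 1 <= M) by (unfold M; apply Nat.neq_0_lt_0, Nat.pow_nonzero; lia).
  assert (HP1 : 2 <= P) by (unfold P; change 2 with (2 ^ 1) at 1; apply Nat.pow_le_mono_r; lia).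
  destruct Hp as [Hp | Hp].
  -
    assert (HXe : X = (P + 2) * (P + 1) ^ a) by (unfold X; rewrite Hp; f_equal; lia).
    set (Y := (P + 1) ^ a) in *.
    assert (HYZ : Z <= Y) by (apply Nat.pow_le_mono_l; lia).
    pose proof (pow_plus P a) as PP. fold Y in PP. rewrite Nat.pow_succ_r' in PP. fold Z in PP.
    destruct Hcase as [Hc2 | Hc2].
    + assert (B1 : X * (P - a) <= (P + 2) * M).
      { rewrite HXe, HMZ, <- Nat.mul_assoc. apply Nat.mul_le_mono_l. exact PP. }
      assert (B2 : (118 * M) * (P - a) <= (80 * X) * (P - a)) by (apply Nat.mul_le_mono_r; lia).
      set (V := P - a) in *.
      assert (B3 : 118 * V * M <= 80 * (P + 2) * M) by lia.
      apply Nat.mul_le_mono_pos_r in B3; [|lia]. unfold V in B3. lia.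
    + assert (P * Z <= X) by (rewrite HXe; apply Nat.mul_le_mono; lia). lia.
  -
    assert (HXe : X = P * (P - 1) ^ a) by (unfold X; rewrite Hp; f_equal; lia).
    set (Y := (P - 1) ^ a) in *.
    assert (HYZ : Y <= Z) by (apply Nat.pow_le_mono_l; lia).
    pose proof (pow_minus P a ltac:(lia)) as PM. fold Y in PM. rewrite Nat.pow_succ_r' in PM. fold Z in PM.
    destruct Hcase as [Hc2 | Hc2].
    + assert (X <= P * Z) by (rewrite HXe; apply Nat.mul_le_mono_l; exact HYZ). lia.
    + assert (256 * a * Z <= P * Z) by (apply Nat.mul_le_mono_r; lia). lia.
Qed.

Theorem mainTheorem12 (p l n k a : nat) :
  (1 <= l)%nat ->
  (p = 2 ^ l + 1 \/ p = 2 ^ l - 1)%nat ->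
  prime (Z.of_nat p) ->
  (2 <= k)%nat -> (k + 2 <= n)%nat -> (1 <= a)%nat ->
  klucas k n = ((p + 1) * p ^ a - 1)%nat ->
  (n ^ 10 < p)%nat ->
  (2 ^ (k - 1) < 10 * n ^ 2)%nat /\ (INR k < 10 * ln (INR n))%R.
Proof.
  intros Hl Hp Hpr Hk Hn Ha Heq Hpn.
  assert (H : 2 ^ (k - 1) < 10 * n ^ 2).
  { destruct (Nat.lt_ge_cases (2 ^ (k - 1)) (10 * n ^ 2)) as [h|h]; auto.
    exfalso. exact (core p l n k a Hl Hp Hk Hn Ha Heq Hpn h). }
  split; auto. apply ln_part; auto.
Qed.
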